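(* Let $v_1,\dots,v_M>0$, $\lambda_1,\dots,\lambda_M>0$, $\bar x\in[0,\sum_m\lambda_m]$, $\lambda_B\theta_B>0$, $\theta_I>0$, $\bar\rho_1,\dots,\bar\rho_M\in[0,1]$, and define the affine functions $\phi_m(\bm c)=\sum_{i=1}^M c_iv_i+\lambda_B\theta_Bv_m+\bar\rho_mc_m\theta_Iv_m$ (positive on the feasible set). Consider $$\max_{\bm c,\bm\beta}\ \sum_{m=1}^M\beta_m\ \text{ s.t. }\ c_mv_m-\beta_m\phi_m(\bm c)\ge0\ \forall m,\quad \sum_{i=1}^M c_i=\bar x,\quad 0\le c_m\le\lambda_m\ \forall m. \tag{$*$}$$ If $(\bm c^*,\bm\beta^* )$ satisfies the KKT conditions of $( * )$, then there exists $\bm u^*=(u_1^*,\dots,u_M^* )$ such that $u_m^*=1/\phi_m(\bm c^* )$ and $c_m^*v_m-\beta_m^*\phi_m(\bm c^* )=0$ for all $m$, and $\bm c^*$ is an optimal solution of the linear program $$\max_{\bm c}\ \sum_{m=1}^M u_m^*\big(c_mv_m-\beta_m^*\phi_m(\bm c)\big)\ \text{ s.t. }\ \sum_{i=1}^M c_i=\bar x,\quad 0\le c_m\le\lambda_m\ \forall m.$$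
   Context: Problem $( * )$ is the epigraph reformulation of the sum-of-ratios problem $\max\sum_m c_mv_m/\phi_m(\bm c)$ over the same constraints, arising from the asymptotic ($R\to\infty$) offloading problem, where $v_m=B_m^{2/\alpha}$ with trust biases $B_m$, $\bar\rho_m$ is an upper bound on the active ratio of group $m$, and $\bar x$ is the fixed total caching density. *)

(* Defs.v *)
(* the statement is purely algebraic/order-theoretic, so it is
   stated over an arbitrary real field R (this includes the reals). *)
From HB Require Import structures.
From mathcomp Require Import all_boot all_order all_algebra.
Set Implicit Arguments. Unset Strict Implicit. Unset Printing Implicit Defensive.
Import Order.TTheory GRing.Theory Num.Theory.
Local Open Scope ring_scope.

Section Defs.
Variables (R : realFieldType) (M : nat).
Variables (v lam rho : 'I_M -> R) (xbar lamB thetaB thetaI : R).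

Definition phi (c : 'I_M -> R) (m : 'I_M) : R :=
  \sum_(i < M) c i * v i + lamB * thetaB * v m + rho m * c m * thetaI * v m.

Definition gcon (c beta : 'I_M -> R) (m : 'I_M) : R :=
  c m * v m - beta m * phi c m.

(* partial derivative d g_k / d c_j (g_k is affine in c for fixed beta) *)
Definition dgcon_dc (beta : 'I_M -> R) (k j : 'I_M) : R :=
  (if k == j then v k else 0)
  - beta k * (v j + (if k == j then rho k * thetaI * v k else 0)).

Definition feas_c (c : 'I_M -> R) : Prop :=
  \sum_(i < M) c i = xbar /\ (forall m, 0 <= c m /\ c m <= lam m).

(* KKT conditions of problem problem P:
     max sum_m beta_m  s.t.  g_m(c,beta) >= 0, sum_i c_i = xbar,
                              c_m >= 0, lam_m - c_m >= 0.
   Lagrangian  L = sum_m beta_m + sum_m u_m g_m + nu (sum_i c_i - xbar)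
                   + sum_m mu_m c_m + sum_m eta_m (lam_m - c_m). *)
Definition KKT (c beta : 'I_M -> R) : Prop :=
  exists (u mu eta : 'I_M -> R) (nu : R),
    (forall m, 0 <= gcon c beta m) /\ feas_c c /\
    (forall m, 0 <= u m /\ 0 <= mu m /\ 0 <= eta m) /\
    (* stationarity w.r.t. beta_m *)
    (forall m, 1 - u m * phi c m = 0) /\
    (* stationarity w.r.t. c_j *)
    (forall j, \sum_(k < M) u k * dgcon_dc beta k j + nu + mu j - eta j = 0) /\
    (forall m, u m * gcon c beta m = 0 /\ mu m * c m = 0 /\
               eta m * (lam m - c m) = 0).

Definition lp_obj (u beta c : 'I_M -> R) : R :=
  \sum_(m < M) u m * gcon c beta m.

End Defs.

(* Main.v *)
Require Import Defs.
From HB Require Import structures.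
From mathcomp Require Import all_boot all_order all_algebra.
From mathcomp Require Import ring lra.
Import Order.TTheory GRing.Theory Num.Theory.
Local Open Scope ring_scope.

Lemma sum_ifeq (R : realFieldType) (M : nat) (m : 'I_M) (a : R) (f : 'I_M -> R) :
  \sum_(j < M) (if m == j then a else 0) * f j = a * f m.
Proof.
rewrite (bigD1 m) //= eqxx big1 ?addr0 // => j /negbTE hj.
by rewrite eq_sym hj mul0r.
Qed.

Lemma gcon_diff (R : realFieldType) (M : nat)
    (v rho : 'I_M -> R) (lamB thetaB thetaI : R) (c cs bs : 'I_M -> R) m :
  gcon v rho lamB thetaB thetaI c bs m - gcon v rho lamB thetaB thetaI cs bs m =
  \sum_(j < M) dgcon_dc v rho thetaI bs m j * (c j - cs j).
Proof.
rewrite /gcon /phi /dgcon_dc.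
have -> : \sum_(j < M)
   ((if m == j then v m else 0) -
    bs m * (v j + (if m == j then rho m * thetaI * v m else 0))) * (c j - cs j)
  = \sum_(j < M) (if m == j then v m else 0) * (c j - cs j)
    - bs m * \sum_(j < M) v j * (c j - cs j)
    - bs m * \sum_(j < M) (if m == j then rho m * thetaI * v m else 0) * (c j - cs j).
  rewrite !mulr_sumr -!sumrB; apply: eq_bigr => j _; ring.
rewrite !sum_ifeq.
have -> : \sum_(j < M) v j * (c j - cs j) =
   \sum_(i < M) c i * v i - \sum_(i < M) cs i * v i.
  rewrite -sumrB; apply: eq_bigr => j _; ring.
ring.
Qed.

Theorem proposition4 (R : realFieldType) (M : nat)
    (v lam rho : 'I_M -> R) (xbar lamB thetaB thetaI : R)
    (hv : forall m, 0 < v m) (hlam : forall m, 0 < lam m)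
    (hx0 : 0 <= xbar) (hx1 : xbar <= \sum_(m < M) lam m)
    (hB : 0 < lamB * thetaB) (hI : 0 < thetaI)
    (hrho : forall m, 0 <= rho m <= 1)
    (cs bs : 'I_M -> R)
    (hKKT : KKT v lam rho xbar lamB thetaB thetaI cs bs) :
  exists us : 'I_M -> R,
    (forall m, us m = 1 / phi v rho lamB thetaB thetaI cs m) /\
    (forall m, gcon v rho lamB thetaB thetaI cs bs m = 0) /\
    feas_c lam xbar cs /\
    (forall c, feas_c lam xbar c ->
       lp_obj v rho lamB thetaB thetaI us bs c
       <= lp_obj v rho lamB thetaB thetaI us bs cs).
Proof.
case: hKKT => u [mu [eta [nu [hg [hf [hd [hst [hsc hcs]]]]]]]].
have hup : forall m, u m * phi v rho lamB thetaB thetaI cs m = 1.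
  by move=> m; move: (hst m); lra.
have hphi : forall m, phi v rho lamB thetaB thetaI cs m != 0.
  by move=> m; apply/eqP => h; move: (hup m); rewrite h mulr0 => /eqP; rewrite eq_sym oner_eq0.
have hu0 : forall m, u m != 0.
  by move=> m; apply/eqP => h; move: (hup m); rewrite h mul0r => /eqP; rewrite eq_sym oner_eq0.
exists u; split; [|split; [|split]].
- by move=> m; rewrite -(hup m) mulfK.
- move=> m; have [h _] := hcs m; move/eqP: h; rewrite mulf_eq0 (negbTE (hu0 m)) /=.
  by move/eqP.
- by [].
- move=> c [hsum hbox]; rewrite -subr_le0 /lp_obj -sumrB.
  have -> : \sum_(m < M) (u m * gcon v rho lamB thetaB thetaI c bs m -
       u m * gcon v rho lamB thetaB thetaI cs bs m)
     = \sum_(m < M) \sum_(j < M) u m * dgcon_dc v rho thetaI bs m j * (c j - cs j).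
    apply: eq_bigr => m _; rewrite -mulrBr gcon_diff mulr_sumr.
    by apply: eq_bigr => j _; rewrite mulrA.
  rewrite exchange_big /=.
  have -> : \sum_(j < M) \sum_(m < M) u m * dgcon_dc v rho thetaI bs m j * (c j - cs j)
     = \sum_(j < M) (eta j - mu j - nu) * (c j - cs j).
    apply: eq_bigr => j _; rewrite -mulr_suml; congr (_ * _).
    by move: (hsc j); lra.
  have -> : \sum_(j < M) (eta j - mu j - nu) * (c j - cs j)
     = \sum_(j < M) (eta j * (c j - cs j) - mu j * c j) - nu * (\sum_(j < M) c j - \sum_(j < M) cs j).
    rewrite mulrBr !mulr_sumr -!sumrB; apply: eq_bigr => j _.
    case: (hcs j) => _ [h2 _]; move: h2; nra.
  case: hf => hsum' _; rewrite hsum hsum' subrr mulr0 subr0.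
  apply: sumr_le0 => j _.
  case: (hcs j) => _ [h2 h3]; case: (hd j) => _ [hmu heta]; case: (hbox j) => hc0 hc1.
  nra.
Qed.
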